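(* Let $\mathcal M=(f,aN)$ be a tight polymatroid, where $a\notin N$, and let $\alpha_1,\alpha_2\ge0$ with $\alpha_1+\alpha_2=f(a)$. Let $\mathcal N=(g,a_1a_2N)$ be the polymatroid that splits $a$ in $\mathcal M$ with parameters $\alpha_1,\alpha_2$, i.e. for all $A\subseteq N$: $g(A)=f(A)$, $g(a_1a_2A)=f(aA)$, and $g(a_iA)=\min\{f(A)+\alpha_i,\,f(aA)\}$ for $i=1,2$. Then the dual $\mathcal N^\perp=(g^\perp,a_1a_2N)$ splits $a$ in $\mathcal M^\perp=(f^\perp,aN)$ with the same parameters: for all $A\subseteq N$, $g^\perp(A)=f^\perp(A)$, $g^\perp(a_1a_2A)=f^\perp(aA)$, and $g^\perp(a_iA)=\min\{f^\perp(A)+\alpha_i,\,f^\perp(aA)\}$ for $i=1,2$; moreover $f^\perp(a)=f(a)=\alpha_1+\alpha_2$.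
   Context: A polymatroid $(f,M)$ consists of a finite set $M$ and a function $f$ on subsets of $M$ with $f(\emptyset)=0$ that is non-negative, monotone and submodular. It is tight if $f(M)=f(M\setminus\{i\})$ for all $i\in M$. The dual of $(f,M)$ is $(f^\perp,M)$ with $f^\perp(A)=f(M\setminus A)+\sum_{i\in A}f(i)-f(M)$. Juxtaposition denotes union, e.g. $aN=\{a\}\cup N$. *)

(* Defs.v *)
From HB Require Import structures.
From mathcomp Require Import all_boot all_order all_algebra.
Set Implicit Arguments. Unset Strict Implicit. Unset Printing Implicit Defensive.
Import Order.TTheory GRing.Theory Num.Theory.
Local Open Scope ring_scope.

Section Poly.
Variables (R : realFieldType) (U : finType).

Definition polymatroid (f : {set U} -> R) : Prop :=
  [/\ f set0 = 0,
      (forall A, 0 <= f A),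
      (forall A B : {set U}, A \subset B -> f A <= f B) &
      (forall A B : {set U}, f (A :|: B) + f (A :&: B) <= f A + f B)].

Definition tight (f : {set U} -> R) : Prop :=
  forall i : U, f [set: U] = f ([set: U] :\ i).

Definition pdual (f : {set U} -> R) (A : {set U}) : R :=
  f (~: A) + \sum_(i in A) f [set i] - f [set: U].
End Poly.

(* Ground set aN is modelled as option T, with a = None and N = Some @: T.
   Ground set a1a2N is modelled as bool + T, with a1 = inl true,
   a2 = inl false and N = inr @: T. *)
Definition embM (T : finType) (A : {set T}) : {set option T} := Some @: A.
Definition embN (T : finType) (A : {set T}) : {set bool + T} := inr @: A.
Definition ea : forall T : finType, option T := fun T => None.
Definition ea1 : forall T : finType, (bool + T)%type := fun T => inl true.
Definition ea2 : forall T : finType, (bool + T)%type := fun T => inl false.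

Definition splits (R : realFieldType) (T : finType)
    (f : {set option T} -> R) (g : {set bool + T} -> R) (al1 al2 : R) : Prop :=
  forall A : {set T},
    [/\ g (embN A) = f (embM A),
        g (ea1 T |: (ea2 T |: embN A)) = f (ea T |: embM A),
        g (ea1 T |: embN A) = Num.min (f (embM A) + al1) (f (ea T |: embM A)) &
        g (ea2 T |: embN A) = Num.min (f (embM A) + al2) (f (ea T |: embM A))].

(* Main.v *)
Require Import Defs.
From HB Require Import structures.
From mathcomp Require Import all_boot all_order all_algebra.
From mathcomp Require Import ring.
Import Order.TTheory GRing.Theory Num.Theory.
Local Open Scope ring_scope.

Section H.
Variable T : finType.

Lemma inN_inr (A : {set T}) x : (inr x \in embN A) = (x \in A).
Proof. by rewrite /embN mem_imset //; move=> u v [->]. Qed.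
Lemma inN_inl (A : {set T}) b : (inl b \in embN A) = false.
Proof. by apply/imsetP => -[y _]. Qed.
Lemma inM_some (A : {set T}) x : (Some x \in embM A) = (x \in A).
Proof. by rewrite /embM mem_imset //; move=> u v [->]. Qed.
Lemma inM_none (A : {set T}) : (None \in embM A) = false.
Proof. by apply/imsetP => -[y _]. Qed.

Lemma cN (A : {set T}) : ~: embN A = ea1 T |: (ea2 T |: embN (~: A)).
Proof.
apply/setP => -[[]|x]; rewrite !inE ?inN_inl ?inN_inr ?inE //=.
Qed.
Lemma cN1 (A : {set T}) : ~: (ea1 T |: embN A) = ea2 T |: embN (~: A).
Proof. apply/setP => -[[]|x]; rewrite !inE ?inN_inl ?inN_inr ?inE //=. Qed.
Lemma cN2 (A : {set T}) : ~: (ea2 T |: embN A) = ea1 T |: embN (~: A).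
Proof. apply/setP => -[[]|x]; rewrite !inE ?inN_inl ?inN_inr ?inE //=. Qed.
Lemma cN12 (A : {set T}) : ~: (ea1 T |: (ea2 T |: embN A)) = embN (~: A).
Proof. apply/setP => -[[]|x]; rewrite !inE ?inN_inl ?inN_inr ?inE //=. Qed.
Lemma TN : [set: bool + T] = ea1 T |: (ea2 T |: embN setT).
Proof. apply/setP => -[[]|x]; rewrite !inE ?inN_inl ?inN_inr ?inE //=. Qed.
Lemma cM (A : {set T}) : ~: embM A = ea T |: embM (~: A).
Proof. apply/setP => -[x|]; rewrite !inE ?inM_none ?inM_some ?inE //=. Qed.
Lemma cM1 (A : {set T}) : ~: (ea T |: embM A) = embM (~: A).
Proof. apply/setP => -[x|]; rewrite !inE ?inM_none ?inM_some ?inE //=. Qed.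
Lemma TM : [set: option T] :\ ea T = embM setT.
Proof. apply/setP => -[x|]; rewrite !inE ?inM_none ?inM_some ?inE //=. Qed.

Lemma sumN (R : realFieldType) (F : bool + T -> R) (A : {set T}) :
  \sum_(i in embN A) F i = \sum_(x in A) F (inr x).
Proof. by rewrite big_imset //; move=> u v _ _ [->]. Qed.
Lemma sumM (R : realFieldType) (F : option T -> R) (A : {set T}) :
  \sum_(i in embM A) F i = \sum_(x in A) F (Some x).
Proof. by rewrite big_imset //; move=> u v _ _ [->]. Qed.
End H.

Lemma minD (R : realFieldType) (c x y : R) :
  Num.min (x + c) (y + c) = Num.min x y + c.
Proof. by case: (lerP x y) => h; [rewrite (min_idPl _) // lerD2r | rewrite (min_idPr _) // lerD2r ltW]. Qed.

Theorem lemma2p11 (R : realFieldType) (T : finType)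
    (f : {set option T} -> R) (g : {set bool + T} -> R) (al1 al2 : R) :
  polymatroid f -> tight f ->
  0 <= al1 -> 0 <= al2 -> al1 + al2 = f [set ea T] ->
  polymatroid g -> splits f g al1 al2 ->
  splits (pdual f) (pdual g) al1 al2 /\
  pdual f [set ea T] = f [set ea T] /\ f [set ea T] = al1 + al2.
Proof.
move=> [f0 _ _ _] ti h1 h2 hs _ sp.
have Ftop : f [set: option T] = f (embM setT) by rewrite (ti (ea T)) TM.
have Gtop : g [set: bool + T] = f [set: option T].
  have [_ + _ _] := sp setT; rewrite -TN => ->.
  congr f; apply/setP => -[x|]; rewrite !inE ?inM_none ?inM_some ?inE //=.
have e0 : embM (set0 : {set T}) = set0 by rewrite /embM imset0.
have g1 : g [set ea1 T] = al1.
  have [_ _ + _] := sp set0; rewrite /embN imset0 setU0 => ->.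
  rewrite e0 setU0 f0 add0r -hs; apply/min_idPl; rewrite lerDl //.
have g2 : g [set ea2 T] = al2.
  have [_ _ _ +] := sp set0; rewrite /embN imset0 setU0 => ->.
  rewrite e0 setU0 f0 add0r -hs; apply/min_idPl; rewrite lerDr //.
have gx : forall x, g [set inr x] = f [set Some x].
  move=> x; have [+ _ _ _] := sp [set x].
  by rewrite /embN /embM !imset_set1.
have sN : forall A : {set T}, \sum_(i in embN A) g [set i] = \sum_(i in embM A) f [set i].
  by move=> A; rewrite sumN sumM; apply: eq_bigr => x _; rewrite gx.
have n1 : forall A : {set T}, ea1 T \notin ea2 T |: embN A.
  by move=> A; rewrite !inE inN_inl.
have n2 : forall A : {set T}, ea2 T \notin embN A by move=> A; rewrite inN_inl.
have n1' : forall A : {set T}, ea1 T \notin embN A by move=> A; rewrite inN_inl.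
have na : forall A : {set T}, ea T \notin embM A by move=> A; rewrite inM_none.
split; last first.
  split=> //; rewrite /pdual big_set1.
  have -> : ~: [set ea T] = [set: option T] :\ ea T by rewrite setTD.
  by rewrite -ti addrC addKr.
move=> A; rewrite /pdual.
have [s1 _ _ _] := sp (~: A).
have [_ s2 _ _] := sp (~: A).
have [_ _ s3 _] := sp (~: A).
have [_ _ _ s4] := sp (~: A).
rewrite cN cN1 cN2 cN12 cM cM1 Gtop s1 s2 s3 s4 sN.
rewrite !big_setU1 ?n1 ?n2 ?n1' ?na //= !sN g1 g2 -hs.
set S := \sum_(i in embM A) f [set i].
set F := f [set: option T].
set fB := f (embM (~: A)). set faB := f (ea T |: embM (~: A)).
split=> //.
- ring.
- transitivity (Num.min (faB + (al1 + S - F)) ((fB + al2) + (al1 + S - F))).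
    by rewrite minD minC; ring.
  by congr Num.min; ring.
- transitivity (Num.min (faB + (al2 + S - F)) ((fB + al1) + (al2 + S - F))).
    by rewrite minD minC; ring.
  by congr Num.min; ring.
Qed.
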